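(* For all $n,k\in\mathbb N$, $t\in(0,1)$, and all $\alpha,\beta\subseteq\{1,\dots,n\}$, $$A_{n,k,t}[\alpha]\,A_{n,k,t}[\beta]\ \ge\ A_{n,k,t}[\alpha\cup\beta]\,A_{n,k,t}[\alpha\cap\beta],$$ and all principal minors of $A_{n,k,t}$ are positive.
   Context: For $x\in\mathbb R$, $x_+=\max\{x,0\}$. For $k\in\mathbb{N}$ and $t\in(0,1)$, $A_{\infty,k,t}=(A(i,j))_{i,j\ge1}$ is the infinite Toeplitz Hessenberg matrix with $A(i,j)=a_{j-i}$ for $j\ge i$, $A(i+1,i)=1$, and $A(i,j)=0$ for $i\ge j+2$, where $(a_0,a_1,\ldots)$ is the unique sequence for which the leading principal minors satisfy $\det A(\{1,\dots,n\})=t^{(n-k-1)_+}$ for all $n\in\mathbb N$. $A_{n,k,t}$ is the leading principal $n\times n$ submatrix of $A_{\infty,k,t}$. $A[\alpha]$ denotes the principal minor (determinant) of $A$ with rows and columns indexed by $\alpha$, with $A[\emptyset]=1$. *)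

(* Defs.v *)
From HB Require Import structures.
From mathcomp Require Import all_boot all_order all_algebra.
Set Implicit Arguments. Unset Strict Implicit. Unset Printing Implicit Defensive.
Import Order.TTheory GRing.Theory Num.Theory.
Local Open Scope ring_scope.

(* The n x n leading principal submatrix of the infinite Toeplitz Hessenberg
   matrix built from the sequence a = (a_0, a_1, ...):
   entry (i,j) (0-based) is a_{j-i} if i <= j, 1 if i = j+1, 0 otherwise. *)
Definition toepHess (R : ringType) (a : nat -> R) (n : nat) : 'M[R]_n :=
  \matrix_(i < n, j < n)
    if (i <= j)%N then a (j - i)%N
    else if (i == j.+1 :> nat) then 1 else 0.

(* Principal minor A[alpha]: determinant of the submatrix with rows and
   columns indexed by alpha (listed increasingly); A[set0] = 1. *)
Definition pminor (R : comRingType) (n : nat) (A : 'M[R]_n) (alpha : {set 'I_n}) : R :=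
  \det (mxsub (fun i : 'I_#|alpha| => enum_val i)
              (fun j : 'I_#|alpha| => enum_val j) A).

(* a is the sequence defining A_{infty,k,t}: every leading principal minor
   det A({1..n}) equals t^{(n-k-1)_+}  (nat subtraction is truncated). *)
Definition is_Akt_seq (R : comRingType) (k : nat) (t : R) (a : nat -> R) : Prop :=
  forall n : nat, \det (toepHess a n) = t ^+ (n - k.+1)%N.

(* Main.v *)
Require Import Defs.
From HB Require Import structures.
From mathcomp Require Import all_boot all_order all_algebra.
From mathcomp Require Import zify.
Import Order.TTheory GRing.Theory Num.Theory.
Local Open Scope ring_scope.

Definition incr (m : nat) (s : nat -> nat) : Prop :=
  forall i j, (i < j)%N -> (j < m)%N -> (s i < s j)%N.

Lemma incr_le {m s} : incr m s -> forall i j, (i <= j)%N -> (j < m)%N -> (s i <= s j)%N.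
Proof.
move=> hs i j; rewrite leq_eqVlt => /orP[/eqP -> //|hij hj].
exact: ltnW (hs _ _ hij hj).
Qed.

Lemma incr_ge {m s} : incr m s -> forall i d, (i + d < m)%N -> (s i + d <= s (i + d))%N.
Proof.
move=> hs i; elim=> [|d IH] h; first by rewrite !addn0.
have h1 : (i + d < m)%N by lia.
have := IH h1; have := hs (i + d)%N (i + d.+1)%N ltac:(lia) h; lia.
Qed.

Lemma incr_shift m1 m2 s : incr (m1 + m2) s -> incr m2 (fun i => s (m1 + i)%N).
Proof. by move=> hs i j hij hj; apply: hs; lia. Qed.

Lemma incr_low m1 m2 s : incr (m1 + m2) s -> incr m1 s.
Proof. by move=> hs i j hij hj; apply: hs; lia. Qed.

Definition Gf (k m : nat) (s : nat -> nat) : nat :=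
  (\sum_(i < m) ((i + k.+1 < m) && (s (i + k.+1) == s i + k.+1)%N))%N.

Lemma Gf_ext k m s s' : (forall i, (i < m)%N -> s i = s' i) -> Gf k m s = Gf k m s'.
Proof.
move=> E; rewrite /Gf; apply: eq_bigr => i _.
case h: (i + k.+1 < m)%N => //=.
by rewrite !E //; lia.
Qed.

Lemma sum_lt c m : (\sum_(i < m) (i + c < m)%N)%N = (m - c)%N.
Proof.
elim: m => [|m IH]; first by rewrite big_ord0.
rewrite big_ord_recl /=.
under eq_bigr => i _ do rewrite /bump /= add1n addSn ltnS.
rewrite IH add0n; case: (leqP c m) => h; lia.
Qed.

Lemma Gf_run k m c : Gf k m (fun i => c + i)%N = (m - k.+1)%N.
Proof.
rewrite /Gf -(sum_lt k.+1 m); apply: eq_bigr => i _.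
by rewrite addnA eqxx andbT.
Qed.

Lemma Gf_block k m1 m2 s : incr (m1 + m2) s -> (0 < m1)%N ->
  ((s m1.-1).+1 < s m1)%N ->
  Gf k (m1 + m2) s = (Gf k m1 s + Gf k m2 (fun i => s (m1 + i)%N))%N.
Proof.
move=> hs h1 hg; rewrite /Gf big_split_ord; congr addn; apply: eq_bigr => i _ /=.
  case: (ltnP (i + k.+1) m1) => h.
    by rewrite (leq_trans h (leq_addr _ _)).
  case h2: (i + k.+1 < m1 + m2)%N => //=.
  have hi := ltn_ord i.
  have A1 := incr_ge hs m1 (i + k.+1 - m1) ltac:(lia).
  have A2 := incr_ge hs i (m1.-1 - i) ltac:(lia).
  have E1 : (m1 + (i + k.+1 - m1))%N = (i + k.+1)%N by lia.
  have E2 : (i + (m1.-1 - i))%N = m1.-1 by lia.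
  rewrite E1 in A1; rewrite E2 in A2.
  suff -> : (s (i + k.+1) == s i + k.+1)%N = false by [].
  by apply/negbTE/eqP; lia.
by rewrite -!addnA ltn_add2l.
Qed.

Lemma sorted_incr (L : seq nat) : sorted ltn L -> incr (size L) (fun i => nth 0%N L i).
Proof.
move=> hL i j hij hj.
apply: (sorted_ltn_nth ltn_trans 0%N hL) => //; rewrite inE; lia.
Qed.

Definition fa {R : comRingType} (a : nat -> R) (x y : nat) : R :=
  if (x <= y)%N then a (y - x)%N else if x == y.+1 then 1 else 0.

Definition Mx {R : comRingType} (a : nat -> R) (m : nat) (s : nat -> nat) : 'M[R]_m :=
  \matrix_(i < m, j < m) fa a (s i) (s j).

Lemma Mx_ext {R : comRingType} (a : nat -> R) m s s' :
  (forall i, (i < m)%N -> s i = s' i) -> Mx a m s = Mx a m s'.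
Proof. by move=> E; apply/matrixP => i j; rewrite !mxE !E. Qed.

Lemma Mx_run {R : comRingType} (a : nat -> R) m c :
  Mx a m (fun i => c + i)%N = toepHess a m.
Proof.
apply/matrixP => i j; rewrite !mxE /fa leq_add2l subnDl -addnS eqn_add2l //.
Qed.

Lemma Mx_block {R : comRingType} (a : nat -> R) m1 m2 s :
  incr (m1 + m2) s -> (0 < m1)%N -> ((s m1.-1).+1 < s m1)%N ->
  \det (Mx a (m1 + m2) s) = \det (Mx a m1 s) * \det (Mx a m2 (fun i => s (m1 + i)%N)).
Proof.
move=> hs h1 hg; rewrite -(submxK (Mx a (m1 + m2) s)).
have -> : dlsubmx (Mx a (m1 + m2) s) = 0.
  apply/matrixP => i j; rewrite !mxE /fa /=.
  have hj := ltn_ord j; have hi := ltn_ord i.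
  have H1 : (s m1 <= s (m1 + i))%N by apply: (incr_le hs); lia.
  have H2 : (s j <= s m1.-1)%N by apply: (incr_le hs); lia.
  have -> : (s (m1 + i) <= s j)%N = false by apply/negbTE; lia.
  suff -> : (s (m1 + i) == (s j).+1)%N = false by [].
  by apply/negbTE/eqP; lia.
by rewrite det_ublock; congr (_ * _); congr (\det _); apply/matrixP => i j; rewrite !mxE.
Qed.

Lemma det_Mx {R : comRingType} {k} {t : R} {a} (ha : is_Akt_seq k t a) m s :
  incr m s -> \det (Mx a m s) = t ^+ Gf k m s.
Proof.
elim/ltn_ind: m s => m IH s hs.
case: (boolP [exists i : 'I_m, (i.+1 < m)%N && (s i.+1 != (s i).+1)]).
  move/existsP => [i0 /andP[hi0 hne]].
  have [i [hi hg]] : exists i, (i.+1 < m)%N /\ ((s i.+1.-1).+1 < s i.+1)%N.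
    exists (val i0); split => //.
    have := hs i0 i0.+1 (ltnSn _) hi0; rewrite /=; move: hne; case: eqP => //; lia.
  clear i0 hi0 hne.
  have [q em] : exists q, m = (i.+1 + q)%N by exists (m - i.+1)%N; rewrite subnKC // ltnW.
  subst m.
  rewrite Mx_block // Gf_block // exprD; congr (_ * _); apply: IH.
  - lia.
  - exact: incr_low hs.
  - lia.
  - exact: incr_shift hs.
rewrite negb_exists => /forallP H.
have Hc : forall i, (i < m)%N -> s i = (s 0 + i)%N.
  elim=> [|i IHi] hi; first by rewrite addn0.
  have := H (Ordinal (ltnW hi)); rewrite /= hi /= negbK => /eqP ->.
  by rewrite IHi ?addnS // ltnW.
by rewrite (@Mx_ext _ a m s _ Hc) Mx_run ha (@Gf_ext k m s _ Hc) Gf_run.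
Qed.

Definition Ls {n : nat} (al : {set 'I_n}) : seq nat := [seq val x | x in al].

Lemma Ls_sorted n (al : {set 'I_n}) : sorted ltn (Ls al).
Proof.
rewrite /Ls /image_mem.
have -> : enum al = [seq x <- enum 'I_n | x \in al].
  by rewrite /enum_mem (@eq_filter _ (mem 'I_n) predT) // filter_predT.
rewrite sorted_map; apply: sorted_filter.
  by move=> x y z /=; exact: ltn_trans.
by rewrite -sorted_map val_enum_ord iota_ltn_sorted.
Qed.

Lemma inLs n (al : {set 'I_n}) v : reflect (exists2 x, x \in al & v = val x) (v \in Ls al).
Proof.
apply: (iffP mapP) => [[x hx ->]|[x hx ->]]; exists x => //; by rewrite ?mem_enum in hx *.
Qed.

Lemma inLsI n (al be : {set 'I_n}) v : (v \in Ls (al :&: be)) = (v \in Ls al) && (v \in Ls be).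
Proof.
apply/idP/andP => [/inLs[x]|[/inLs[x hx ->] /inLs[y hy]]].
  by rewrite inE => /andP[h1 h2] ->; split; apply/inLs; exists x.
move/val_inj => E; subst y; apply/inLs; exists x => //; by rewrite inE hx hy.
Qed.

Lemma inLsU n (al be : {set 'I_n}) v : (v \in Ls al) || (v \in Ls be) -> (v \in Ls (al :|: be)).
Proof.
by case/orP => /inLs[x hx ->]; apply/inLs; exists x => //; rewrite inE hx ?orbT.
Qed.

Definition win (k : nat) {n : nat} (al : {set 'I_n}) : {set 'I_n} :=
  [set x : 'I_n | all (fun d => (val x + d)%N \in Ls al) (iota 0 k.+2)].

Lemma winI k n (al be : {set 'I_n}) : win k (al :&: be) = win k al :&: win k be.
Proof.
apply/setP => x; rewrite !inE -all_predI; apply: eq_all => d /=; exact: inLsI.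
Qed.

Lemma winU k n (al be : {set 'I_n}) : win k al :|: win k be \subset win k (al :|: be).
Proof.
apply/subsetP => x; rewrite !inE => /orP[] h; apply: sub_all h => d /= h;
  by apply: inLsU; rewrite h ?orbT.
Qed.

Lemma win_seq (L : seq nat) i D : sorted ltn L -> (i < size L)%N ->
  all (fun d => (nth 0%N L i + d)%N \in L) (iota 0 D.+1) =
  (i + D < size L)%N && (nth 0%N L (i + D) == nth 0%N L i + D)%N.
Proof.
move=> hL hi; have hs := sorted_incr L hL.
elim: D => [|D IH].
  by rewrite /= !addn0 mem_nth // hi eqxx.
rewrite -addn1 iotaD all_cat IH /= andbT add0n.
case: (boolP ((i + D < size L)%N && (nth 0%N L (i + D) == nth 0%N L i + D)%N)) => /=.
  move=> /andP[h1 /eqP h2].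
  apply/idP/andP => [/(nthP 0%N) [j hj ej]|[h3 /eqP h4]].
    have {}hj : (j < size L)%N := hj.
    have {}ej : (nth 0%N L j = nth 0%N L i + D.+1)%N := ej.
    have hjD : (i + D < j)%N.
      case: (leqP j (i + D)) => // hle.
      have /= := incr_le hs _ _ hle h1; move=> ?; exfalso; lia.
    have h5 : (i + D.+1 < size L)%N by lia.
    split => //.
    have /= := incr_le hs (i + D.+1)%N j ltac:(lia) hj.
    have /= := hs (i + D)%N (i + D.+1)%N ltac:(lia) h5.
    move=> *; apply/eqP; lia.
  by rewrite -h4 mem_nth.
move=> H; symmetry; apply/negbTE; apply: contra H => /andP[h3 /eqP h4].
have h5 : (i + D < size L)%N by lia.
have := incr_ge hs i D h5; have /= := hs (i + D)%N (i + D.+1)%N ltac:(lia) h3.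
by move=> *; rewrite h5 /=; apply/eqP; lia.
Qed.

Lemma size_Ls n (al : {set 'I_n}) : size (Ls al) = #|al|.
Proof. exact: size_image. Qed.

Lemma nth_Ls n (al : {set 'I_n}) (i : 'I_#|al|) : nth 0%N (Ls al) i = val (enum_val i).
Proof. exact: nth_image. Qed.

Lemma card_win k n (al : {set 'I_n}) :
  #|win k al| = Gf k #|al| (fun i => nth 0%N (Ls al) i).
Proof.
have sub : win k al \subset al.
  apply/subsetP => x; rewrite inE /= => /andP[/inLs[y hy] E _].
  by rewrite addn0 in E; rewrite (val_inj E).
transitivity (\sum_(x in al) (x \in win k al : nat))%N.
  rewrite -sum1_card big_mkcond [RHS]big_mkcond /=; apply: eq_bigr => x _.
  case: (boolP (x \in win k al)) => h; first by rewrite (subsetP sub _ h).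
  by case: (x \in al).
rewrite big_enum_val /Gf; apply: eq_bigr => i _.
rewrite inE nth_Ls.
have := @win_seq (Ls al) i k.+1 (Ls_sorted _ al); rewrite size_Ls nth_Ls => -> //.
Qed.

Lemma pminor_Mx {R : comRingType} (a : nat -> R) n (al : {set 'I_n}) :
  pminor (toepHess a n) al = \det (Mx a #|al| (fun i => nth 0%N (Ls al) i)).
Proof.
rewrite /pminor; congr (\det _); apply/matrixP => i j.
by rewrite !mxE !nth_Ls.
Qed.

Lemma pminor_eq {R : comRingType} {k} {t : R} {a} (ha : is_Akt_seq k t a) n (al : {set 'I_n}) :
  pminor (toepHess a n) al = t ^+ #|win k al|.
Proof.
rewrite pminor_Mx (det_Mx ha) ?card_win //.
by have := sorted_incr _ (Ls_sorted _ al); rewrite size_Ls.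
Qed.

Theorem mainTheorem3 (R : realFieldType) (n k : nat) (t : R)
  (ht0 : 0 < t) (ht1 : t < 1) (a : nat -> R) (ha : is_Akt_seq k t a) :
  (forall alpha beta : {set 'I_n},
     pminor (toepHess a n) alpha * pminor (toepHess a n) beta
     >= pminor (toepHess a n) (alpha :|: beta) * pminor (toepHess a n) (alpha :&: beta))
  /\ (forall alpha : {set 'I_n}, 0 < pminor (toepHess a n) alpha).
Proof.
split.
  move=> al be; rewrite !(pminor_eq ha) -!exprD.
  apply: ler_wiXn2l; [exact: ltW | exact: ltW |].
  rewrite -cardsUI winI leq_add2r. apply: subset_leq_card; exact: winU.
by move=> al; rewrite (pminor_eq ha) exprn_gt0.
Qed.
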